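(* Let $S$ be a finite set of endomorphisms of $\mathbb{P}^N$, all of degree at least $2$, let $C_S:=\max\{\sup_{\phi\in S}C(\phi),1\}$, let $K/\mathbb{Q}$ be a finite extension over which every map in $S$ is defined, let $P\in\mathbb{P}^N(K)$, and let $F_{P,S}:=\{Q\in\mathrm{Orb}_S(P):h(Q)\leq 2C_S\}$. Then $\phi(\mathrm{Orb}_S(P)\setminus F_{P,S})\subseteq\mathrm{Orb}_S(P)\setminus F_{P,S}$ for all $\phi\in S$.
   Context: $h$ is the absolute Weil height on $\mathbb{P}^N(\overline{\mathbb{Q}})$. For an endomorphism $\phi$ of degree $d_\phi$, $C(\phi)=\sup_{Q\in\mathbb{P}^N(\overline{\mathbb{Q}})}|h(\phi(Q))-d_\phi h(Q)|$. $\mathrm{Orb}_S(P)=\{\rho(P):\rho\in M_S\}$, where $M_S$ is the monoid of the identity and all finite compositions of elements of $S$. *)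

(* Defs.v *)
From HB Require Import structures.
From mathcomp Require Import all_boot all_order all_algebra.
From mathcomp Require Import all_classical all_reals ereal.
Set Implicit Arguments. Unset Strict Implicit. Unset Printing Implicit Defensive.
Import Order.TTheory GRing.Theory Num.Theory.
Local Open Scope classical_set_scope.
Local Open Scope ring_scope.

(* Abstract setting: X plays the role of P^N(Qbar), h : X -> R the height,
   deg : (X -> X) -> nat the degree of an endomorphism. *)

Inductive in_monoid (X : Type) (S : set (X -> X)) : (X -> X) -> Prop :=
  | monoid_id : in_monoid S id
  | monoid_comp rho phi : in_monoid S rho -> S phi -> in_monoid S (phi \o rho).

Definition orbS (X : Type) (S : set (X -> X)) (P : X) : set X :=
  [set rho P | rho in in_monoid S].

Definition Cconst (R : realType) (X : Type) (h : X -> R) (deg : (X -> X) -> nat)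
    (phi : X -> X) : \bar R :=
  ereal_sup [set (`| h (phi Q) - (deg phi)%:R * h Q |)%:E | Q in [set: X]].

Definition CS (R : realType) (X : Type) (h : X -> R) (deg : (X -> X) -> nat)
    (S : set (X -> X)) : \bar R :=
  Order.max (ereal_sup [set Cconst h deg phi | phi in S]) 1%E.

Definition FPS (R : realType) (X : Type) (h : X -> R) (deg : (X -> X) -> nat)
    (S : set (X -> X)) (P : X) : set X :=
  [set Q | orbS S P Q /\ ((h Q)%:E <= 2%:E * CS h deg S)%E].

(* Main.v *)
Require Import Defs.
From HB Require Import structures.
From mathcomp Require Import all_boot all_order all_algebra.
From mathcomp Require Import all_classical all_reals ereal.
From mathcomp Require Import lra.
Import Order.TTheory GRing.Theory Num.Theory.
Local Open Scope classical_set_scope.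
Local Open Scope ring_scope.

Theorem lemma4p2 (R : realType) (X : Type) (h : X -> R)
    (deg : (X -> X) -> nat) (S : set (X -> X)) (P : X) :
  finite_set S ->
  (forall phi, S phi -> (2 <= deg phi)%N) ->
  forall phi, S phi ->
    phi @` (orbS S P `\` FPS h deg S P) `<=` orbS S P `\` FPS h deg S P.
Proof.
move=> _ Hdeg phi Sphi _ [Q [oQ nFQ] <-].
have oPQ : orbS S P (phi Q).
  case: oQ => rho Mrho <-; exists (phi \o rho) => //; exact: monoid_comp.
split => // -[_ Hle].
apply: nFQ; split => //.
have H1 : ((`| h (phi Q) - (deg phi)%:R * h Q |)%:E <= CS h deg S)%E.
  apply: (@le_trans _ _ (Cconst h deg phi)).
    by apply: ereal_sup_ubound; exists Q.
  apply: (@le_trans _ _ (ereal_sup [set Cconst h deg phi | phi in S])).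
    by apply: ereal_sup_ubound; exists phi.
  by rewrite /CS le_max lexx.
have H2 : (1 <= CS h deg S)%E by rewrite /CS le_max lexx orbT.
move: H1 H2 Hle; case: (CS h deg S) => [c| |] //.
- move=> H1 H2 Hle; rewrite !lee_fin in H1 H2.
  have {}Hle : h (phi Q) <= 2 * c by rewrite -lee_fin EFinM.
  have hd : (2 : R) <= (deg phi)%:R by rewrite (ler_nat R 2); exact: Hdeg.
  rewrite lee_fin; apply: contraLR Hle; rewrite -!ltNge => hQ.
  have hQ0 : 0 <= h Q by apply: le_trans (ltW hQ); nra.
  have := ler_norm (h (phi Q) - (deg phi)%:R * h Q).
  have := ler_normr (h (phi Q) - (deg phi)%:R * h Q).
  move=> _ Hn.
  have Hm : - `|h (phi Q) - (deg phi)%:R * h Q| <= h (phi Q) - (deg phi)%:R * h Q.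
    by rewrite lerNnormlW.
  nra.
- move=> _ _ _; by rewrite mulry gtr0_sg // mul1e leey.
Qed.
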